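(* Let $n$ be a positive integer and let $A(n)=(a_{ij})$, $p=p(n)$, $pp=pp(n)$, $b(n)$ be as in the context. Let $m\ge 1$ be an integer such that $\overline{p}=pm$ satisfies $\lfloor \overline{p}/2\rfloor> b(n)$, put $r=\lfloor\overline{p}/2\rfloor$, let $v$ be an integer with $v\ge pp+\overline{p}$, and let $B=(b_{ij})_{1\le i,j\le\overline{p}}$ be the $\overline{p}\times\overline{p}$ matrix with $b_{ij}=a_{v+i,v+j}$ if $i-r\le j\le i+r$; $b_{ij}=a_{v+i,v+j-\overline{p}}$ if $j>i+r$; $b_{ij}=a_{v+i,v+j+\overline{p}}$ if $j<i-r$. Then $B$ is symmetric.
   Context: $\mathbb{N}=\{1,2,3,\dots\}$. Fix a positive integer $n$. The infinite $\{0,1\}$-matrix $A(n)=(a_{ij})_{i,j\in\mathbb{N}}$ is defined recursively. Its entries are determined row by row (row $1$ first), and within each row from left to right, so that $a_{kl}$ is determined after all $a_{ij}$ with $i<k$ and all $a_{kj}$ with $j<l$. One sets $a_{kl}=1$ if and only if all of the following hold: (1) $\sum_{j<l}a_{kj}<n+1$; (2) $\sum_{i<k}a_{il}<n+1$; (3) there is no pair $(i,j)$ with $1\le i<k$, $1\le j<l$ and $a_{ij}=a_{il}=a_{kj}=1$. Otherwise $a_{kl}=0$. The matrix $A(n)$ is eventually periodic along the diagonal: there exist $c\ge0$, $q\ge1$ with $a_{i+q,j+q}=a_{ij}$ for all $i>c$, $j\ge1$. The period $p=p(n)$ is the smallest $q\ge1$ for which such a $c$ exists, and the preperiod $pp=pp(n)$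 is the smallest $c\ge 0$ with $a_{i+p,j+p}=a_{ij}$ for all $i>c$, $j\ge 1$. Define $b(n)=\max\{|j-i| : i,j\ge1,\ a_{ij}=1,\ i>pp(n)\}$. *)

(* Defs.v *)
From mathcomp Require Import all_boot all_algebra.
Set Implicit Arguments. Unset Strict Implicit. Unset Printing Implicit Defensive.

(* The infinite 0/1 matrix A(n), indices 1-based.  Internally we build the
   finite top-left K x L block row by row, each row left to right.  Entry
   (k,l) depends only on entries (i,j) with i <= k, j <= l, so computing it
   inside the k x l block gives the same value as in the infinite matrix. *)

(* new entry in column l (0-based) of the row being built, given the
   previous rows [prev] and the already built part [r] of the current row *)
Definition new_entry (n : nat) (prev : seq (seq bool)) (r : seq bool) (l : nat) : bool :=
  [&& count id r < n.+1,
      count (fun row => nth false row l) prev < n.+1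
    & ~~ has (fun row => nth false row l &&
                 has (fun j => nth false row j && nth false r j) (iota 0 l))
             prev].

Fixpoint build_row (n : nat) (prev : seq (seq bool)) (l : nat) : seq bool :=
  match l with
  | 0 => [::]
  | l'.+1 => let r := build_row n prev l' in rcons r (new_entry n prev r l')
  end.

Fixpoint block (n K L : nat) : seq (seq bool) :=
  match K with
  | 0 => [::]
  | K'.+1 => let p := block n K' L in rcons p (build_row n p L)
  end.

(* a n i j = a_{ij} of A(n), for i, j >= 1 (false otherwise) *)
Definition a (n i j : nat) : bool :=
  [&& 0 < i, 0 < j & nth false (nth [::] (block n i j) i.-1) j.-1].

Definition periodic (n q c : nat) : Prop :=
  forall i j, c < i -> 0 < j -> a n (i + q) (j + q) = a n i j.

Definition is_period (n p : nat) : Prop :=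
  [/\ 0 < p, exists c, periodic n p c
    & forall q, 0 < q -> q < p -> ~ (exists c, periodic n q c)].

Definition is_preperiod (n p pp : nat) : Prop :=
  periodic n p pp /\ forall c, c < pp -> ~ periodic n p c.

Definition ndist (i j : nat) : nat := (j - i) + (i - j).

Definition is_b (n pp b : nat) : Prop :=
  (exists i j, [/\ pp < i, 0 < j, a n i j & ndist i j = b]) /\
  (forall i j, pp < i -> 0 < j -> a n i j -> ndist i j <= b).

(* The pbar x pbar matrix B (0-based MathComp indices i, j correspond to
   the paper's 1-based i+1, j+1), r = floor(pbar/2). *)
Definition Bmat (n v pbar : nat) : 'M[bool]_pbar :=
  \matrix_(i < pbar, j < pbar)
    let i' := i.+1 in let j' := j.+1 in let r := pbar./2 in
    if i' + r < j' then a n (v + i') (v + j' - pbar)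
    else if j' + r < i' then a n (v + i') (v + j' + pbar)
    else a n (v + i') (v + j').

(* Main.v *)
Require Import Defs.
From mathcomp Require Import all_boot all_algebra.
From mathcomp Require Import zify.

Lemma size_build_row n prev l : size (build_row n prev l) = l.
Proof. by elim: l => //= l IH; rewrite size_rcons IH. Qed.

Lemma nth_build_row n prev l j : j < l ->
  nth false (build_row n prev l) j = new_entry n prev (build_row n prev j) j.
Proof.
elim: l => // l IH hj /=; rewrite nth_rcons size_build_row.
case: ltnP => hjl; first exact: IH.
have -> : j = l by lia.
by rewrite eqxx.
Qed.

Lemma size_block n K L : size (block n K L) = K.
Proof. by elim: K => //= K IH; rewrite size_rcons IH. Qed.

Lemma nth_block n K L k : k < K ->
  nth [::] (block n K L) k = build_row n (block n k L) L.
Proof.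
elim: K => // K IH hk /=; rewrite nth_rcons size_block.
case: ltnP => hkK; first exact: IH.
have -> : k = K by lia.
by rewrite eqxx.
Qed.

Definition F n K L k l := nth false (nth [::] (block n K L) k) l.

Lemma count_nth {T} (x0 : T) (s : seq T) (f : T -> bool) :
  count f s = count (fun i => f (nth x0 s i)) (iota 0 (size s)).
Proof. by rewrite -{1}(mkseq_nth x0 s) /mkseq count_map. Qed.

Lemma has_nth {T} (x0 : T) (s : seq T) (f : T -> bool) :
  has f s = has (fun i => f (nth x0 s i)) (iota 0 (size s)).
Proof. by rewrite -{1}(mkseq_nth x0 s) /mkseq has_map. Qed.

Lemma F_rec n K L k l : k < K -> l < L ->
  F n K L k l =
  [&& count (fun j => F n K L k j) (iota 0 l) < n.+1,
      count (fun i => F n K L i l) (iota 0 k) < n.+1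
    & ~~ has (fun i => F n K L i l &&
               has (fun j => F n K L i j && F n K L k j) (iota 0 l)) (iota 0 k)].
Proof.
move=> hk hl.
set P := block n k L.
have Erow : forall j, j < l -> nth false (build_row n P l) j = F n K L k j.
  move=> j hj; rewrite /F nth_block // nth_build_row // nth_build_row //; lia.
have Eprev : forall i, i < k -> nth [::] P i = nth [::] (block n K L) i.
  move=> i hi; rewrite /P !nth_block //; lia.
have E1 : count id (build_row n P l) = count (fun j => F n K L k j) (iota 0 l).
  rewrite (count_nth false) size_build_row.
  apply: eq_in_count => j; rewrite mem_iota => /andP[_ hj].
  exact: Erow.
have E2 : count (fun row => nth false row l) P = count (fun i => F n K L i l) (iota 0 k).
  rewrite (count_nth [::]) {2}/P size_block.
  apply: eq_in_count => i; rewrite mem_iota => /andP[_ hi].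
  by rewrite /= Eprev.
have E3 : has (fun row => nth false row l &&
                 has (fun j => nth false row j && nth false (build_row n P l) j) (iota 0 l)) P
   = has (fun i => F n K L i l &&
               has (fun j => F n K L i j && F n K L k j) (iota 0 l)) (iota 0 k).
  rewrite (has_nth [::]) {2}/P size_block.
  apply: eq_in_has => i; rewrite mem_iota => /andP[_ hi].
  rewrite /= Eprev //; congr (_ && _).
  apply: eq_in_has => j; rewrite mem_iota => /andP[_ hj].
  by rewrite /= Erow.
rewrite {1}/F nth_block // nth_build_row // /new_entry -/P E1 E2 E3.
by [].
Qed.

Lemma F_indep n s : forall k l K L K' L', k + l < s -> k < K -> l < L -> k < K' -> l < L' ->
  F n K L k l = F n K' L' k l.
Proof.
elim: s => // s IH k l K L K' L' hs hk hl hk' hl'.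
rewrite F_rec // [RHS]F_rec //.
congr [&& _ < _, _ < _ & ~~ _].
- apply: eq_in_count => j; rewrite mem_iota => /andP[_ hj]; apply: IH; lia.
- apply: eq_in_count => i; rewrite mem_iota => /andP[_ hi]; apply: IH; lia.
- apply: eq_in_has => i; rewrite mem_iota => /andP[_ hi] /=.
  rewrite (IH i l K L K' L'); try lia; congr (_ && _).
  apply: eq_in_has => j; rewrite mem_iota => /andP[_ hj] /=.
  rewrite (IH i j K L K' L'); try lia.
  by rewrite (IH k j K L K' L'); try lia.
Qed.

Lemma F_sym n N s : forall k l, k + l < s -> k < N -> l < N -> F n N N k l = F n N N l k.
Proof.
elim: s => // s IH k l hs hk hl.
rewrite F_rec // [RHS]F_rec //.
rewrite andbCA; congr [&& _ < _, _ < _ & ~~ _].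
- apply: eq_in_count => i; rewrite mem_iota => /andP[_ hi]; apply: IH; lia.
- apply: eq_in_count => j; rewrite mem_iota => /andP[_ hj]; apply: IH; lia.
- apply/hasP/hasP.
  + move=> [i]; rewrite mem_iota => /andP[_ hi] /andP[h1 /hasP[j]].
    rewrite mem_iota => /andP[_ hj] /andP[h2 h3].
    exists j; first by rewrite mem_iota; lia.
    rewrite (IH j k) ?h3 /=; try lia.
    apply/hasP; exists i; first by rewrite mem_iota; lia.
    by rewrite (IH j i) ?h2 ?(IH l i) ?h1 //; lia.
  + move=> [j]; rewrite mem_iota => /andP[_ hj] /andP[h1 /hasP[i]].
    rewrite mem_iota => /andP[_ hi] /andP[h2 h3].
    exists i; first by rewrite mem_iota; lia.
    rewrite (IH i l) ?h3 /=; try lia.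
    apply/hasP; exists j; first by rewrite mem_iota; lia.
    by rewrite (IH i j) ?h2 ?(IH k j) ?h1 //; lia.
Qed.

Lemma a_sym n i j : a n i j = a n j i.
Proof.
rewrite /a; case: i => [|i]; case: j => [|j] //=.
rewrite -/(F n i.+1 j.+1 i j) -/(F n j.+1 i.+1 j i).
rewrite (@F_indep n (i+j).+1 i j i.+1 j.+1 (i+j).+1 (i+j).+1); try lia.
rewrite [RHS](@F_indep n (i+j).+1 j i j.+1 i.+1 (i+j).+1 (i+j).+1); try lia.
apply: (@F_sym n (i+j).+1 (i+j).+1); lia.
Qed.

Lemma periodic_mul n p c t : periodic n p c ->
  forall i j, c < i -> 0 < j -> a n (i + p * t) (j + p * t) = a n i j.
Proof.
move=> hp; elim: t => [|t IH] i j hi hj; first by rewrite !muln0 !addn0.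
have -> : i + p * t.+1 = (i + p * t) + p by rewrite mulnS; lia.
have -> : j + p * t.+1 = (j + p * t) + p by rewrite mulnS; lia.
rewrite hp; try lia.
exact: IH.
Qed.

Theorem theorem4p2 (n p pp b m v : nat) :
  0 < n -> is_period n p -> is_preperiod n p pp -> is_b n pp b ->
  0 < m -> b < (p * m)./2 -> pp + p * m <= v ->
  ((Bmat n v (p * m))^T)%R = Bmat n v (p * m).
Proof.
move=> _ _ [hper _] _ _ _ hv.
have per := @periodic_mul n p pp m hper.
apply/matrixP => i j; rewrite !mxE /=.
set P := p * m in hv per *.
set r := P./2.
case: ltnP => h1.
  case: ltnP => h2; first lia.
  rewrite (a_sym n (v + i.+1)).
  rewrite -(per (v + j.+1) (v + i.+1 - P)); try lia.
  by have -> : v + i.+1 - P + P = v + i.+1 by lia.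
case: ltnP => h2.
  rewrite (a_sym n (v + j.+1)).
  rewrite -(per (v + i.+1) (v + j.+1 - P)); try lia.
  by have -> : v + j.+1 - P + P = v + j.+1 by lia.
exact: a_sym.
Qed.
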